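(* Let $p=1^i0^j1^k$ with integers $i,k\ge0$ and $j\ge1$. For every $n\ge i+j+k$, $$M_{n,p}=\max\left\{\binom{a}{i}\binom{b}{j}\binom{c}{k}\ :\ a,b,c\ge 0,\ a+b+c=n\right\}.$$
   Context: $c_p(w)$ is the number of occurrences of $p$ as a (not necessarily consecutive) subsequence of the binary word $w$. $M_{n,p}=\max\{c_p(w): w\in\{0,1\}^n\}$. $x^m$ denotes the letter $x$ repeated $m$ times. *)

(* Defs.v *)
From mathcomp Require Import all_boot.
Set Implicit Arguments.
Unset Strict Implicit.
Unset Printing Implicit Defensive.

(* c_p(w): number of occurrences of p as a (not necessarily consecutive)
   subsequence of w, i.e. number of position sets (encoded as selection
   masks of length |w|) selecting exactly p. *)
Definition occ (p : seq bool) (n : nat) (w : n.-tuple bool) : nat :=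
  #|[set m : n.-tuple bool | mask m w == p]|.

Definition Mnp (n : nat) (p : seq bool) : nat :=
  \max_(w : n.-tuple bool) occ p w.

Definition pat (i j k : nat) : seq bool :=
  nseq i true ++ nseq j false ++ nseq k true.

(* Main.v *)
Require Import Defs.
From mathcomp Require Import all_boot zify.
Set Implicit Arguments.

Fixpoint cnt (p w : seq bool) : nat :=
  match w with
  | [::] => (p == [::])
  | x :: w' => cnt p w' + (if p is y :: p' then (x == y) * cnt p' w' else 0)
  end.

Lemma sum_tupleS n (F : seq bool -> nat) :
  \sum_(t : n.+1.-tuple bool) F t =
  \sum_(t : n.-tuple bool) F (true :: t) + \sum_(t : n.-tuple bool) F (false :: t).
Proof.
rewrite (reindex (fun p : bool * n.-tuple bool => [tuple of p.1 :: p.2])) /=.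
  rewrite -(pair_big xpredT xpredT (fun b (t : n.-tuple bool) => F (b :: t))) /=.
  by rewrite big_bool.
exists (fun t : n.+1.-tuple bool => (thead t, [tuple of behead t])).
  by move=> [b t] _ /=; congr pair; apply: val_inj.
by move=> t _; rewrite [in RHS](tuple_eta t); apply: val_inj.
Qed.

Lemma sum_mask (w p : seq bool) :
  \sum_(m : (size w).-tuple bool) (mask m w == p) = cnt p w.
Proof.
elim: w p => [|x w IH] p /=.
  rewrite (big_pred1 [tuple]) /=; first by case: p.
  by move=> t; rewrite [t]tuple0 /= eqxx.
rewrite (sum_tupleS _ (fun m => nat_of_bool (mask m (x :: w) == p))) /=.
rewrite IH addnC; congr addn.
case: p => [|y p'].
  by rewrite big1.
under eq_bigr do rewrite eqseq_cons.
rewrite -IH big_distrr /=; apply: eq_bigr => m _.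
by case: (x == y); case: (mask m w == p').
Qed.

Lemma occE n (w : n.-tuple bool) p : occ p w = cnt p w.
Proof.
case: w => s Hs; have E : size s = n by apply/eqP.
subst n.
rewrite /occ -sum1dep_card big_mkcond /= -sum_mask.
by apply: eq_bigr => m _; case: (_ == _).
Qed.

Lemma cnt_nil w : cnt [::] w = 1.
Proof. by elim: w => //= x w ->. Qed.

Lemma cnt_ones c k : cnt (nseq k true) (nseq c true) = 'C(c, k).
Proof.
elim: c k => [|c IH] [|k] //=; first by rewrite cnt_nil.
by rewrite mul1n binS -(IH k.+1) -IH.
Qed.

Lemma cnt_false_ones p c : false \in p -> cnt p (nseq c true) = 0.
Proof.
elim: c p => [|c IH] [|y p] //= H.
rewrite IH //; case: y H => /= H; last by [].
by rewrite IH.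
Qed.

Lemma cnt_zo b c j k :
  cnt (nseq j false ++ nseq k true) (nseq b false ++ nseq c true)
  = 'C(b, j) * 'C(c, k).
Proof.
elim: b j => [|b IH] [|j] /=.
- by rewrite cnt_ones mul1n.
- by rewrite cnt_false_ones // inE eqxx.
- move: (IH 0) => /= ->; rewrite !bin0; case: k {IH} => [|k] /=; by rewrite addn0.
- by rewrite mul1n binS mulnDl -(IH j.+1) -(IH j).
Qed.

Lemma cnt_pat a b c i j k : 0 < j ->
  cnt (pat i j k) (nseq a true ++ nseq b false ++ nseq c true)
  = 'C(a, i) * 'C(b, j) * 'C(c, k).
Proof.
move=> j0; rewrite /pat.
elim: a i => [|a IH] [|i] /=.
- by rewrite cnt_zo mul1n.
- elim: b => [|b IHb] /=.
    rewrite cnt_false_ones // in_cons !mem_cat.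
    by case: j j0 => // j _; rewrite mem_nseq /= orbT.
  by rewrite mul0n addn0 IHb.
- move: (IH 0) => /= ->; rewrite !bin0; case: j j0 {IH} => //= j _; by rewrite addn0.
- by rewrite mul1n binS !mulnDl -(IH i.+1) -(IH i).
Qed.

Fixpoint Qf (g : nat -> nat) (j k : nat) (w : seq bool) : nat :=
  match w with
  | [::] => 0
  | x :: w' => if x then Qf (fun L => g L.+1) j k w'
               else Qf g j k w' + g 0 * cnt (nseq j.-1 false ++ nseq k true) w'
  end.

Lemma Qf_lin j k w : forall g g1 g2, (forall L, g L = g1 L + g2 L) ->
  Qf g j k w = Qf g1 j k w + Qf g2 j k w.
Proof.
elim: w => [|x w IH] g g1 g2 H //=.
case: x; first by apply: IH.
rewrite (IH g g1 g2) // H mulnDl; lia.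
Qed.

Lemma Qf0 j k w : Qf (fun _ => 0) j k w = 0.
Proof. by elim: w => //= x w IH; case: x => //; rewrite mul0n addn0. Qed.

Lemma Qf_ext j k w : forall g g1, (forall L, g L = g1 L) ->
  Qf g j k w = Qf g1 j k w.
Proof.
move=> g g1 H; rewrite (@Qf_lin j k w g g1 (fun _ => 0)) ?Qf0 ?addn0 //.
by move=> L; rewrite addn0.
Qed.

Lemma cnt_Qf j k w : 0 < j -> forall i,
  cnt (pat i j k) w = Qf (fun L => 'C(L, i)) j k w.
Proof.
move=> j0; rewrite /pat; elim: w => [|x w IH] i /=.
  by case: i => //; case: j j0.
case: x i => [[|i]|[|i]] /=.
- case: j j0 IH => // j _ IH /=; rewrite addn0.
  rewrite (@Qf_ext _ _ _ _ (binomial^~ 0)); last by move=> L; rewrite !bin0.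
  by move: (IH 0).
- move: (IH i.+1) (IH i) => /= -> ->; rewrite mul1n.
  symmetry; apply: Qf_lin => L; exact: binS.
- case: j j0 IH => // j _ IH /=; move: (IH 0) => /= ->.
  by rewrite bin0.
- by move: (IH i.+1) => /= ->; rewrite mul0n !addn0.
Qed.

Lemma cnt_zo_le j k w :
  cnt (nseq j false ++ nseq k true) w <= 'C(count negb w, j) * 'C(count id w, k).
Proof.
elim: w j k => [|x w IH] j k /=.
  by case: j => [|j]; case: k.
case: x => /=; case: j => [|j] /=; rewrite ?add0n ?add1n.
- case: k => [|k] /=; first by rewrite cnt_nil !bin0.
  rewrite mul1n binS mulnDr; apply: leq_add; first exact: (IH 0).
  exact: (IH 0).
- rewrite addn0; apply: leq_trans (IH j.+1 k) _.
  by rewrite leq_mul2l leq_bin2l ?orbT.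
- case: k => [|k] /=; first by rewrite cnt_nil !bin0.
  by rewrite addn0; move: (IH 0 k.+1); rewrite /= bin0.
- rewrite mul1n binS mulnDl; apply: leq_add; first exact: (IH j.+1).
  exact: (IH j).
Qed.

Lemma Qf_bound j k w : 0 < j -> forall g, exists2 L, L <= count id w &
  Qf g j k w <= 'C(count negb w, j) * (g L * 'C(count id w - L, k)).
Proof.
move=> j0; elim: w => [|x w IH] g /=.
  by exists 0.
case: x => /=.
  have [L HL HQ] := IH (fun L => g L.+1).
  by exists L.+1; rewrite ?subSS.
have [L HL HQ] := IH g.
set X := g L * 'C(count id w - L, k).
set Y := g 0 * 'C(count id w - 0, k).
have H2 : g 0 * cnt (nseq j.-1 false ++ nseq k true) w <= 'C(count negb w, j.-1) * Y.
  rewrite /Y subn0 mulnCA leq_mul2l; apply/orP; right.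
  exact: cnt_zo_le.
rewrite add0n add1n; case: j j0 H2 {IH} HQ => // j _ H2 HQ.
have [XY|YX] := leqP Y X.
  exists L => //; rewrite binS mulnDl; apply: leq_add => //.
  apply: leq_trans H2 _; rewrite leq_mul2l XY orbT //.
exists 0 => //; rewrite binS mulnDl subn0; apply: leq_add.
  apply: leq_trans HQ _; rewrite leq_mul2l ltnW ?orbT //.
  by move: YX; rewrite /X /Y subn0.
by move: H2; rewrite /Y subn0.
Qed.

Lemma count_ion (w : seq bool) : count id w + count negb w = size w.
Proof. by elim: w => //= -[] w IH /=; lia. Qed.

Theorem mainTheorem7 (i j k n : nat) :
  1 <= j -> i + j + k <= n ->
  Mnp n (pat i j k) =
  \max_(a < n.+1) \max_(b < n.+1 | a + b <= n)
     ('C(a, i) * 'C(b, j) * 'C(n - a - b, k)).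
Proof.
move=> j0 hn; apply/eqP; rewrite eqn_leq; apply/andP; split.
- apply/bigmax_leqP => w _; rewrite occE (@cnt_Qf j k w j0).
  have [L HL HQ] := @Qf_bound j k w j0 (binomial^~ i).
  have Hs : count id w + count negb w = n by rewrite count_ion size_tuple.
  apply: leq_trans HQ _.
  have HLn : L < n.+1 by lia.
  have Hz : count negb w < n.+1 by lia.
  apply: leq_trans _ (leq_bigmax (Ordinal HLn)).
  have Hc : L + count negb w <= n by lia.
  apply: leq_trans _ (leq_bigmax_cond (Ordinal Hz) Hc) => /=.
  rewrite (_ : n - L - count negb w = count id w - L); last by lia.
  by rewrite mulnCA mulnA.
- apply/bigmax_leqP => a _; apply/bigmax_leqP => b Hab.
  have Hw : size (nseq a true ++ nseq b false ++ nseq (n - a - b) true) == n.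
    by rewrite !size_cat !size_nseq; apply/eqP; lia.
  apply: leq_trans _ (leq_bigmax (Tuple Hw)).
  by rewrite occE /= cnt_pat.
Qed.
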